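(* (1) For fixed $x$, $\tau_*(x,t)$ and $\tau^*(x,t)$ are monotonically increasing in $t$, and for fixed $t$ they are monotonically decreasing in $x$. Moreover, for $t_1<t_2$ one has $\tau^*(x,t_1)\le\tau_*(x,t_2)$, and for $x_1<x_2$ one has $\tau_*(x_1,t)\ge\tau^*(x_2,t)$. (2) For fixed $t$, $y_*(x,t)$ and $y^*(x,t)$ are monotonically increasing in $x$, and for $x_1<x_2$ one has $y^*(x_1,t)\le y_*(x_2,t)$. (3) $\tau_*(0,t)=\tau^*(0,t)=t$. (4) $y_*$ is lower semicontinuous and $y^*$ is upper semicontinuous (as functions of $(x,t)$). (5) $\tau_*$ is lower semicontinuous and $\tau^*$ is upper semicontinuous.
   Context: Standing assumptions: $u_0,u_b:[0,\infty)\to\mathbb{R}$ bounded measurable with $u_b>0$; $\rho_0,\rho_b:[0,\infty)\to(0,\infty)$ positive locally bounded measurable. For $x,t,y,\tau\ge0$: $F(y,x,t)=\int_0^y[tu_0(\eta)+\eta-x]\rho_0(\eta)\,d\eta$, $G(\tau,x,t)=\int_0^\tau[x-u_b(\eta)(t-\eta)]\rho_b(\eta)u_b(\eta)\,d\eta$. The minima $\min_{y\ge0}F(y,x,t)$ and $\min_{\tau\ge0}G(\tau,x,t)$ are attained; $y_*(x,t)$, $y^*(x,t)$ denote the smallest and largest minimizers of $y\mapsto F(y,x,t)$, and $\tau_*(x,t)$, $\tau^*(x,t)$ the smallest and largest minimizers of $\tau\mapsto G(\tau,x,t)$. *)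

(* Defs.v *)
From HB Require Import structures.
From mathcomp Require Import all_boot all_order all_algebra.
From mathcomp Require Import all_classical all_reals all_analysis.
Set Implicit Arguments. Unset Strict Implicit. Unset Printing Implicit Defensive.
Import Order.TTheory GRing.Theory Num.Theory.
Import numFieldNormedType.Exports.
Local Open Scope classical_set_scope.
Local Open Scope ring_scope.

Section Defs.
Variable R : realType.

Definition Ffun (u0 rho0 : R -> R) (y x t : R) : R :=
  \int[@lebesgue_measure R]_(eta in `[0, y]) ((t * u0 eta + eta - x) * rho0 eta).

Definition Gfun (ub rhob : R -> R) (tau x t : R) : R :=
  \int[@lebesgue_measure R]_(eta in `[0, tau])
     ((x - ub eta * (t - eta)) * rhob eta * ub eta).

Definition argmin0 (phi : R -> R) : set R :=
  [set y | 0 <= y /\ forall z, 0 <= z -> phi y <= phi z].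

Definition y_low u0 rho0 x t : R := inf (argmin0 (fun y => Ffun u0 rho0 y x t)).
Definition y_up  u0 rho0 x t : R := sup (argmin0 (fun y => Ffun u0 rho0 y x t)).
Definition tau_low ub rhob x t : R := inf (argmin0 (fun tau => Gfun ub rhob tau x t)).
Definition tau_up  ub rhob x t : R := sup (argmin0 (fun tau => Gfun ub rhob tau x t)).

Definition quad : set (R * R) := [set p | 0 <= p.1 /\ 0 <= p.2].

Definition lsc_on (D : set (R * R)) (f : R * R -> R) :=
  forall p, D p -> forall a, a < f p -> \forall q \near p, D q -> a < f q.
Definition usc_on (D : set (R * R)) (f : R * R -> R) :=
  forall p, D p -> forall a, f p < a -> \forall q \near p, D q -> f q < a.

End Defs.

(* Main.v *)
Require Import Defs.
From HB Require Import structures.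
From mathcomp Require Import all_boot all_order all_algebra.
From mathcomp Require Import all_classical all_reals all_analysis.
From mathcomp Require Import ring lra.
Import Order.TTheory GRing.Theory Num.Theory.
Import numFieldNormedType.Exports.
Local Open Scope classical_set_scope.
Local Open Scope ring_scope.

Section Abstract.
Context {R : realType}.

Lemma near_box (p : R*R) e : 0 < e ->
  \forall q \near p, `|q.1 - p.1| < e /\ `|q.2 - p.2| < e.
Proof. move=> e0; apply: filterS (nbhsx_ballx p e e0) => q [/= h1 h2].
move: h1 h2; rewrite /ball /=. by rewrite !(distrC q.1) !(distrC q.2).
Qed.

Lemma ball_R (y e z : R) : ball y e z -> `|y - z| < e.
Proof. by rewrite /ball. Qed.

Lemma dist_max0 (y z : R) : `|Order.max y 0 - Order.max z 0| <= `|y - z|.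
Proof.
have [y0|y0] := leP 0 y; have [z0|z0] := leP 0 z.
- by [].
- by rewrite subr0 !ger0_norm //; lra.
- by rewrite sub0r normrN (ger0_norm z0) ler0_norm; lra.
- by rewrite subrr normr0.
Qed.

Lemma lip_within (f : R -> R) a b : 0 <= a ->
  (forall L, exists K, forall y1 y2, 0 <= y1 <= L -> 0 <= y2 <= L ->
      `|f y1 - f y2| <= K * `|y1 - y2|) ->
  {within `[a, b], continuous f}.
Proof.
move=> a0 hL.
have cg : continuous (fun y : R => f (Order.max y 0)).
  move=> y; apply/cvgrPdist_lt => e e0.
  have [K hK] := hL (`|y| + 1).
  set K' := `|K| + 1.
  have K'0 : 0 < K' by rewrite /K'; have := normr_ge0 K; lra.
  have d0 : 0 < Order.min 1 (e / K') by rewrite lt_min ltr01 divr_gt0.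
  apply: filterS (nbhsx_ballx y _ d0) => z /ball_R.
  rewrite lt_min => /andP[z1 z2].
  have hy : 0 <= Order.max y 0 <= `|y| + 1.
    rewrite le_max lexx orbT /= ge_max; apply/andP; split.
      by have := ler_norm y; lra.
    by have := normr_ge0 y; lra.
  have hz : 0 <= Order.max z 0 <= `|y| + 1.
    rewrite le_max lexx orbT /= ge_max; apply/andP; split; last first.
      by have := normr_ge0 y; lra.
    have : `|z| <= `|y| + `|y - z|.
      by rewrite -{1}(subKr y z) (le_trans (ler_normB _ _)) // addrC distrC.
    have := ler_norm z; lra.
  apply: (le_lt_trans (hK _ _ hy hz)).
  apply: (le_lt_trans (y := K' * `|y - z|)).
    apply: (le_trans (ler_wpM2r (normr_ge0 _) (ler_norm K))).
    apply: ler_pM => //; last exact: dist_max0.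
    by rewrite /K'; lra.
  by rewrite mulrC -ltr_pdivlMr.
apply: (@subspace_eq_continuous _ _ _ (fun y : R => f (Order.max y 0))).
  move=> y; rewrite inE /= in_itv /= => /andP[ay _].
  by rewrite max_l //; apply: le_trans ay.
exact: continuous_subspaceT.
Qed.

Lemma sets_order (S1 S2 : set R) (B : R) :
  S1 !=set0 -> S2 !=set0 ->
  (forall y, S1 y -> 0 <= y <= B) -> (forall y, S2 y -> 0 <= y <= B) ->
  (forall a b, S1 a -> S2 b -> a <= b) ->
  [/\ inf S1 <= inf S2, sup S1 <= sup S2 & sup S1 <= inf S2].
Proof.
move=> [s1 hs1] [s2 hs2] hb1 hb2 h12.
have lb1 : has_lbound S1 by exists 0 => y /hb1 /andP[].
have ub2 : has_ubound S2 by exists B => y /hb2 /andP[].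
have ub1 : has_ubound S1 by exists B => y /hb1 /andP[].
have lb2 : has_lbound S2 by exists 0 => y /hb2 /andP[].
have key : sup S1 <= inf S2.
  apply: lb_le_inf; first by exists s2.
  move=> b hb; apply: ge_sup; first by exists s1.
  by move=> a ha; apply: h12.
have i1 : inf S1 <= sup S1.
  by apply: le_trans (ge_inf lb1 hs1) (ub_le_sup ub1 hs1).
have i2 : inf S2 <= sup S2.
  by apply: le_trans (ge_inf lb2 hs2) (ub_le_sup ub2 hs2).
split => //; [exact: le_trans i1 key | exact: le_trans key i2].
Qed.

Lemma argmin_compare (f1 f2 h : R -> R) (c : R) : 0 < c ->
  (forall y, 0 <= y -> f2 y = f1 y + c * h y) ->
  (forall y z, 0 <= y -> y < z -> h z < h y) ->
  forall a b, argmin0 f1 a -> argmin0 f2 b -> a <= b.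
Proof.
move=> c0 hf hh a b [a0 ha] [b0 hb].
rewrite leNgt; apply/negP => ba.
have := ha b b0; have := hb a a0; rewrite !hf //.
have := hh _ _ b0 ba.
move=> h1 h2 h3.
have : c * h a < c * h b by rewrite ltr_pM2l.
lra.
Qed.

Section Semi.
Variable Phi : R -> R -> R -> R.
Hypothesis hne : forall x t, 0 <= x -> 0 <= t ->
  exists y, argmin0 (fun y => Phi y x t) y.
Hypothesis hcont : forall x t a b, 0 <= a ->
  {within `[a, b], continuous (fun y => Phi y x t)}.
Hypothesis hclose : forall x t L, exists K, 0 < K /\
  forall x' t' y, 0 <= y <= L ->
  `|Phi y x' t' - Phi y x t| <= K * (`|x' - x| + `|t' - t|).
Hypothesis hbnd : forall x t, 0 <= x -> 0 <= t -> exists B,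
  forall x' t', 0 <= x' -> 0 <= t' -> `|x' - x| < 1 -> `|t' - t| < 1 ->
  forall y, argmin0 (fun y => Phi y x' t') y -> y <= B.

Lemma core x t a b : 0 <= a -> a <= b ->
  (exists y0, argmin0 (fun y => Phi y x t) y0) ->
  (forall y, a <= y <= b -> ~ argmin0 (fun y => Phi y x t) y) ->
  \forall q \near (x, t), forall y, a <= y <= b ->
     ~ argmin0 (fun y => Phi y q.1 q.2) y.
Proof.
move=> a0 ab [y0 hy0] hno.
have [c cab cmin] := EVT_min ab (@hcont x t a b a0).
move: cab; rewrite in_itv /= => /andP[ac cb].
have c0 : 0 <= c by apply: le_trans ac.
have dpos : Phi y0 x t < Phi c x t.
  rewrite ltNge; apply/negP => hc.
  apply: (hno c); first by rewrite ac cb.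
  split => // z z0; apply: le_trans hc _.
  by case: hy0 => _; apply.
have [K [K0 hK]] := hclose x t (Order.max b y0).
set d := Phi c x t - Phi y0 x t.
have d0 : 0 < d by rewrite /d subr_gt0.
have e0 : 0 < d / (4 * K) by rewrite divr_gt0 // mulr_gt0.
apply: filterS (near_box (x, t) _ e0) => q /= [h1 h2] y hy [_ hmin].
case: hy0 => y00 _.
have := hmin y0 y00.
have yL : 0 <= y <= Order.max b y0.
  case/andP: hy => ay yb; rewrite (le_trans a0 ay) /= le_max yb //.
have y0L : 0 <= y0 <= Order.max b y0 by rewrite y00 le_max lexx orbT.
have hs : K * (`|q.1 - x| + `|q.2 - t|) < d / 2.
  have -> : d / 2 = K * (2 * (d / (4 * K))).
    field; by rewrite gt_eqF.
  by rewrite ltr_pM2l // ; lra.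
have := hK q.1 q.2 _ yL; have := hK q.1 q.2 _ y0L.
have := cmin y; rewrite in_itv /= => /(_ hy) hcy.
move=> b1 b2 hq.
have := le_lt_trans b1 hs; have := le_lt_trans b2 hs.
rewrite !ltr_norml.
rewrite /d in hs *.
lra.
Qed.

Lemma lsc_inf : lsc_on (@quad R)
  (fun p => inf (argmin0 (fun y => Phi y p.1 p.2))).
Proof.
move=> [x t] /= [x0 t0] a ha.
have nonneg : forall x' t', 0 <= x' -> 0 <= t' ->
    0 <= inf (argmin0 (fun y => Phi y x' t')).
  move=> x' t' hx ht; apply: lb_le_inf.
    by have [y hy] := hne _ _ hx ht; exists y.
  by move=> y [].
have [a0|a0] := ltP a 0.
  apply: filterE => q [q1 q2]; apply: lt_le_trans a0 _; exact: nonneg.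
set S := argmin0 (fun y => Phi y x t).
have lbS : has_lbound S by exists 0 => y [].
have b0 : 0 <= (a + inf S) / 2 by apply: divr_ge0 => //; lra.
apply: filterS (@core x t 0 _ (lexx 0) b0 (hne _ _ x0 t0) _) => [q hq [q1 q2]|].
  apply: (@lt_le_trans _ _ ((a + inf S) / 2)); first lra.
  apply: lb_le_inf; first by have [y hy] := hne _ _ q1 q2; exists y.
  move=> y hy; rewrite leNgt; apply/negP => yb.
  apply: (hq y) => //; rewrite (ltW yb) andbT; by case: hy.
move=> y /andP[_ yb] hy.
have := ge_inf lbS hy; rewrite -/S => hiy.
lra.
Qed.

Lemma usc_sup : usc_on (@quad R)
  (fun p => sup (argmin0 (fun y => Phi y p.1 p.2))).
Proof.
move=> [x t] /= [x0 t0] a ha.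
set S := argmin0 (fun y => Phi y x t).
have [B hB] := hbnd _ _ x0 t0.
have ubS : has_ubound S.
  by exists B => y hy; apply: (hB x t) => //; rewrite subrr normr0 ltr01.
have [y0 hy0] := hne _ _ x0 t0.
have s0 : 0 <= sup S by apply: le_trans (ub_le_sup ubS hy0); case: hy0.
have b0 : 0 <= (sup S + a) / 2 by apply: divr_ge0 => //; lra.
have bB : (sup S + a) / 2 <= Order.max B ((sup S + a) / 2) by rewrite le_max lexx orbT.
apply: filterS2 (@core x t _ _ b0 bB (hne _ _ x0 t0) _) (near_box (x, t) _ ltr01)
  => [q hq /= [d1 d2] [q1 q2]|].
  apply: (@le_lt_trans _ _ ((sup S + a) / 2)); last lra.
  apply: ge_sup; first by have [y hy] := hne _ _ q1 q2; exists y.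
  move=> y hy; rewrite leNgt; apply/negP => yb.
  apply: (hq y) => //; rewrite (ltW yb) /= le_max.
  by rewrite (hB q.1 q.2 q1 q2 d1 d2 y hy).
move=> y /andP[yb _] hy.
have := ub_le_sup ubS hy; rewrite -/S => hiy.
lra.
Qed.

End Semi.
End Abstract.


Section Meas.
Context {R : realType}.
Notation mu := (@lebesgue_measure R).

Definition good (f : R -> R) := measurable_fun (`[0%R, +oo[ : set R) f /\
  forall L, exists K, forall y, 0 <= y <= L -> `|f y| <= K.

Lemma good_int f (D : set R) (L : R) : good f -> measurable D -> D `<=` `[0, L] ->
  mu.-integrable D (EFin \o f).
Proof.
move=> [mf bf] mD DL.
apply: measurable_bounded_integrable => //.
- apply: (@le_lt_trans _ _ (mu `[0, L])).
    by apply: le_measure => //; rewrite inE.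
  by rewrite lebesgue_measure_itv /=; case: ifP => _; rewrite ?ltry.
- apply: measurable_funS mf => //.
  by move=> y /DL; rewrite /= !in_itv /= => /andP[-> _].
- have [K hK] := bf L.
  exists K; split; first exact: num_real.
  move=> M KM y Dy /=; apply: le_trans (hK y _) (ltW KM).
  by have := DL y Dy; rewrite /= in_itv.
Qed.


Arguments good_int {f D L}.

Lemma good_cst c : good (fun _ => c).
Proof. split; first exact: measurable_cst. by move=> L; exists `|c|. Qed.

Lemma good_id : good (fun y => y).
Proof.
split; first exact: measurable_id.
move=> L; exists L => y /andP[y0 yL]; by rewrite ger0_norm.
Qed.

Lemma good_add f g : good f -> good g -> good (fun y => f y + g y).
Proof.
move=> [mf bf] [mg bg]; split; first exact: measurable_realfun.measurable_funD.
move=> L; have [K1 h1] := bf L; have [K2 h2] := bg L.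
exists (K1 + K2) => y hy; apply: le_trans (ler_normD _ _) _.
by apply: lerD; [exact: h1 | exact: h2].
Qed.

Lemma good_sub f g : good f -> good g -> good (fun y => f y - g y).
Proof.
move=> [mf bf] [mg bg]; split; first exact: measurable_realfun.measurable_funB.
move=> L; have [K1 h1] := bf L; have [K2 h2] := bg L.
exists (K1 + K2) => y hy; apply: le_trans (ler_normB _ _) _.
by apply: lerD; [exact: h1 | exact: h2].
Qed.

Lemma good_opp f : good f -> good (fun y => - f y).
Proof.
move=> [mf bf]; split; first exact: measurable_realfun.measurable_funN.
move=> L; have [K h] := bf L; exists K => y hy; rewrite normrN; exact: h.
Qed.

Lemma good_mul f g : good f -> good g -> good (fun y => f y * g y).
Proof.
move=> [mf bf] [mg bg]; split; first exact: measurable_realfun.measurable_funM.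
move=> L; have [K1 h1] := bf L; have [K2 h2] := bg L.
exists (K1 * K2) => y hy; rewrite normrM.
by apply: ler_pM => //; [exact: h1 | exact: h2].
Qed.

Lemma mu_cc (y : R) : 0 <= y -> fine (mu `[0, y]) = y.
Proof.
move=> y0; rewrite lebesgue_measure_itv /=.
case: ifPn; rewrite lte_fin => h; first by rewrite /= subr0.
by apply/eqP; rewrite eq_le y0 /=; rewrite -leNgt in h.
Qed.

Lemma mu_oc (y1 y2 : R) : y1 <= y2 -> fine (mu `]y1, y2]) = y2 - y1.
Proof.
move=> h; rewrite lebesgue_measure_itv /=.
case: ifPn; rewrite lte_fin => h'; first by [].
rewrite -leNgt in h'; have -> : y1 = y2 by apply/eqP; rewrite eq_le h h'.
by rewrite subrr.
Qed.

Lemma P_split f y1 y2 : good f -> 0 <= y1 -> y1 <= y2 ->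
  \int[mu]_(x in `[0, y2]) f x - \int[mu]_(x in `[0, y1]) f x =
  \int[mu]_(x in `]y1, y2]) f x.
Proof.
move=> gf y10 y12.
apply: Rintegral_itvB; last by rewrite bnd_simp.
  by apply: (@good_int _ _ y2) => //.
by rewrite bnd_simp.
Qed.

Lemma int_le f (D : set R) L K : good f -> measurable D -> D `<=` `[0, L] ->
  (forall y, D y -> `|f y| <= K) ->
  `|\int[mu]_(x in D) f x| <= K * fine (mu D).
Proof.
move=> gf mD DL hK.
have iD := good_int gf mD DL.
have h1 : `|\int[mu]_(x in D) f x| <= \int[mu]_(x in D) `|f x|.
  by apply: le_normr_Rintegral => //; exact: mD.
apply: le_trans h1 _.
rewrite -Rintegral_cst //.
apply: le_Rintegral => //; first exact: integrable_norm.
apply: (@good_int (fun _ => K) _ L) => //; exact: good_cst.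
Qed.

Lemma int_pos f y1 y2 : good f -> 0 <= y1 -> y1 < y2 ->
  (forall y, y1 < y <= y2 -> 0 < f y) ->
  0 < \int[mu]_(x in `]y1, y2]) f x.
Proof.
move=> gf y10 y12 hf.
have DL : (`]y1, y2] : set R) `<=` `[0, y2].
  move=> y; rewrite /= !in_itv /= => /andP[a b]; rewrite b andbT.
  by apply: le_trans (ltW a).
have iD : mu.-integrable `]y1, y2] (EFin \o f) by exact: good_int gf _ DL.
have ge0 : 0 <= \int[mu]_(x in `]y1, y2]) f x.
  apply: Rintegral_ge0 => y; rewrite /= in_itv /= => h; exact/ltW/hf.
rewrite lt_neqAle ge0 andbT; apply/negP => /eqP h0.
have fin : (\int[mu]_(x in `]y1, y2]) (EFin \o f) x)%E \is a fin_num.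
  by apply: integrable_fin_num.
have h0' : (\int[mu]_(x in `]y1, y2]) (f x)%:E = 0)%E.
  by rewrite -(fineK fin); rewrite /Rintegral in h0; rewrite -h0.
have habs : (\int[mu]_(x in `]y1, y2]) `|(EFin \o f) x| = 0)%E.
  rewrite -h0'; apply: eq_integral => y; rewrite inE /= in_itv /= => h.
  by rewrite ?gee0_abs ?ger0_norm ?lee_fin //; apply/ltW/hf.
move/integrableP: (iD) => [mf _].
have := (ae_eq_integral_abs mu (measurable_itv _) mf).1 habs.
case=> N [mN N0 sub].
have : (mu `]y1, y2] <= mu N)%E.
  apply: le_measure; rewrite ?inE //.
  move=> y hy; apply: sub => /= /(_ hy) /= [] /eqP.
  by rewrite gt_eqF //; apply: hf; move: hy; rewrite /= in_itv.
rewrite N0 lebesgue_measure_itv /= lte_fin y12 lee_fin subr_le0 leNgt y12.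
by [].
Qed.


Definition P (g : R -> R) (y : R) := \int[mu]_(x in `[0, y]) g x.

Lemma gint_cc g y : good g -> mu.-integrable `[0, y] (EFin \o g).
Proof. move=> gg; apply: (@good_int g _ y gg) => //. Qed.

Lemma P_mono g y1 y2 : good g -> 0 <= y1 -> y1 <= y2 ->
  (forall y, y1 < y <= y2 -> 0 <= g y) -> P g y1 <= P g y2.
Proof.
move=> gg y10 y12 hg; rewrite -subr_ge0 /P P_split //.
by apply: Rintegral_ge0 => y; rewrite /= in_itv /=; apply: hg.
Qed.

Lemma P_smono g y1 y2 : good g -> 0 <= y1 -> y1 < y2 ->
  (forall y, y1 < y <= y2 -> 0 < g y) -> P g y1 < P g y2.
Proof.
move=> gg y10 y12 hg; rewrite -subr_gt0 /P P_split //; last exact: ltW.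
exact: int_pos.
Qed.

Lemma P_opp g y : good g -> P (fun x => - g x) y = - P g y.
Proof.
move=> gg; rewrite /P.
rewrite (@eq_Rintegral _ _ _ mu _ (fun x => -1 * g x)); last first.
  by move=> x _; rewrite mulN1r.
by rewrite RintegralZl ?mulN1r //; exact: gint_cc.
Qed.

Lemma Plip g : good g -> forall L, exists K, forall y1 y2,
  0 <= y1 <= L -> 0 <= y2 <= L -> `|P g y1 - P g y2| <= K * `|y1 - y2|.
Proof.
move=> gg L; have [_ bg] := gg; have [K hK] := bg L.
exists K.
suff H : forall y1 y2, 0 <= y1 <= L -> 0 <= y2 <= L -> y1 <= y2 ->
    `|P g y1 - P g y2| <= K * `|y1 - y2|.
  move=> y1 y2 h1 h2; have [le|le] := leP y1 y2; first exact: H.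
  by rewrite distrC (distrC y1); apply: H => //; exact: ltW.
move=> y1 y2 /andP[y10 y1L] /andP[y20 y2L] y12.
rewrite distrC (distrC y1) /P P_split // (ger0_norm (x := y2 - y1)) ?subr_ge0 //.
rewrite -mu_oc //.
apply: (@int_le _ _ L) => //.
  move=> y; rewrite /= !in_itv /= => /andP[a b].
  by rewrite (le_trans b y2L) (le_trans y10 (ltW a)).
move=> y; rewrite /= in_itv /= => /andP[a b]; apply: hK.
by rewrite (le_trans b y2L) (le_trans y10 (ltW a)).
Qed.

Lemma Pbound g : good g -> forall L, exists K, 0 <= K /\ forall y, 0 <= y <= L -> `|P g y| <= K.
Proof.
move=> gg L; have [_ bg] := gg; have [K hK] := bg L.
exists (`|K| * `|L|); split; first by rewrite mulr_ge0.
move=> y /andP[y0 yL].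
have := @int_le g `[0, y] L K gg (measurable_itv _) _ _.
rewrite mu_cc // => H; apply: le_trans (H _ _) _.
- move=> z; rewrite /= !in_itv /= => /andP[a b]; by rewrite a (le_trans b yL).
- move=> z; rewrite /= !in_itv /= => /andP[a b]; apply: hK; by rewrite a (le_trans b yL).
- apply: ler_pM; rewrite ?ler_norm //.
  + by apply: le_trans (normr_ge0 (g 0)) (hK _ _); rewrite lexx (le_trans y0 yL).
  + by apply: le_trans (ler_norm L); exact: yL.
Qed.

Lemma hcont_of g : good g -> forall a b, 0 <= a ->
  {within `[a, b], continuous (P g)}.
Proof. by move=> gg a b a0; apply: lip_within => //; exact: Plip. Qed.

Lemma close_gen (Phi : R -> R -> R -> R) g1 g2 : good g1 -> good g2 ->
  (forall y x t x' t', 0 <= y ->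
     Phi y x' t' - Phi y x t = (x' - x) * P g1 y + (t' - t) * P g2 y) ->
  forall x t L, exists K, 0 < K /\ forall x' t' y, 0 <= y <= L ->
  `|Phi y x' t' - Phi y x t| <= K * (`|x' - x| + `|t' - t|).
Proof.
move=> gg1 gg2 hd x t L.
have [K1 [K10 h1]] := @Pbound g1 gg1 L; have [K2 [K20 h2]] := @Pbound g2 gg2 L.
exists (K1 + K2 + 1); split; first lra.
move=> x' t' y hy; rewrite hd; last by case/andP: hy.
apply: le_trans (ler_normD _ _) _; rewrite !normrM.
have a1 := h1 _ hy; have a2 := h2 _ hy.
have n1 := normr_ge0 (x' - x); have n2 := normr_ge0 (t' - t).
have b1 : `|x' - x| * `|P g1 y| <= `|x' - x| * K1 by apply: ler_wpM2l.
have b2 : `|t' - t| * `|P g2 y| <= `|t' - t| * K2 by apply: ler_wpM2l.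
have c1 := mulr_ge0 n1 K20; have c2 := mulr_ge0 n2 K10.
nra.
Qed.

End Meas.


Section Main.
Context {R : realType}.
Notation mu := (@lebesgue_measure R).
Variables (u0 ub rho0 rhob : R -> R).
Hypotheses (gu0 : good u0) (gub : good ub) (gr0 : good rho0) (grb : good rhob).
Variables (Mu : R).
Hypothesis hMu : forall eta, 0 <= eta -> `|u0 eta| <= Mu.
Hypothesis hubp : forall eta, 0 <= eta -> 0 < ub eta.
Hypothesis hr0p : forall eta, 0 <= eta -> 0 < rho0 eta.
Hypothesis hrbp : forall eta, 0 <= eta -> 0 < rhob eta.

Lemma gFi x t : good (fun e => (t * u0 e + e - x) * rho0 e).
Proof.
apply: good_mul => //; apply: good_sub; last exact: good_cst.
apply: good_add; last exact: good_id.
by apply: good_mul => //; exact: good_cst.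
Qed.

Lemma gGi x t : good (fun e => (x - ub e * (t - e)) * rhob e * ub e).
Proof.
apply: good_mul => //; apply: good_mul => //; apply: good_sub; first exact: good_cst.
apply: good_mul => //; apply: good_sub; [exact: good_cst | exact: good_id].
Qed.

Lemma Fdiff y x t x' t' : 0 <= y ->
  Ffun u0 rho0 y x' t' - Ffun u0 rho0 y x t =
  (x' - x) * P (fun e => - rho0 e) y + (t' - t) * P (fun e => u0 e * rho0 e) y.
Proof.
move=> y0; rewrite /Ffun /P -RintegralB //; try exact: gint_cc (gFi _ _).
rewrite (@eq_Rintegral _ _ _ mu _
  (fun e => (x' - x) * (- rho0 e) + (t' - t) * (u0 e * rho0 e))); last first.
  by move=> e _; ring.
rewrite RintegralD //; first last.
- by apply: gint_cc; apply: good_mul; [exact: good_cst | exact: good_mul].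
- by apply: gint_cc; apply: good_mul; [exact: good_cst | exact: good_opp].
rewrite RintegralZl //; last by apply: gint_cc; exact: good_opp.
rewrite RintegralZl //; last by apply: gint_cc; exact: good_mul.
Qed.


Lemma Gdiff y x t x' t' : 0 <= y ->
  Gfun ub rhob y x' t' - Gfun ub rhob y x t =
  (x' - x) * P (fun e => rhob e * ub e) y +
  (t' - t) * P (fun e => - (ub e * rhob e * ub e)) y.
Proof.
move=> y0; rewrite /Gfun /P -RintegralB //; try exact: gint_cc (gGi _ _).
rewrite (@eq_Rintegral _ _ _ mu _
  (fun e => (x' - x) * (rhob e * ub e) + (t' - t) * (- (ub e * rhob e * ub e))));
  last by move=> e _; ring.
have g3 : good (fun e => ub e * rhob e * ub e).
  by apply: good_mul => //; exact: good_mul.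
rewrite RintegralD //; first last.
- by apply: gint_cc; apply: good_mul; [exact: good_cst | exact: good_opp].
- by apply: gint_cc; apply: good_mul; [exact: good_cst | exact: good_mul].
rewrite RintegralZl //; last by apply: gint_cc; exact: good_mul.
rewrite RintegralZl //; last by apply: gint_cc; exact: good_opp.
Qed.

Lemma Mu0 : 0 <= Mu.
Proof. exact: le_trans (normr_ge0 _) (hMu 0 (lexx 0)). Qed.

Lemma FB x t y : 0 <= x -> 0 <= t ->
  argmin0 (fun y => Ffun u0 rho0 y x t) y -> y <= x + t * Mu.
Proof.
move=> x0 t0 [y0 hy]; rewrite leNgt; apply/negP => hlt.
have Y0 : 0 <= x + t * Mu by rewrite addr_ge0 // mulr_ge0 // Mu0.
have := hy _ Y0; apply/negP; rewrite -ltNge.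
apply: (@P_smono _ (fun e => (t * u0 e + e - x) * rho0 e)) => //.
  exact: gFi.
move=> e /andP[a b].
have e0 : 0 <= e by apply: le_trans Y0 (ltW a).
apply: mulr_gt0; last exact: hr0p.
have := hMu _ e0; rewrite ler_norml => /andP[h1 _].
have : t * (- Mu) <= t * u0 e by apply: ler_wpM2l.
lra.
Qed.

Lemma GB x t y : 0 <= x -> 0 <= t ->
  argmin0 (fun y => Gfun ub rhob y x t) y -> y <= t.
Proof.
move=> x0 t0 [y0 hy]; rewrite leNgt; apply/negP => hlt.
have := hy _ t0; apply/negP; rewrite -ltNge.
apply: (@P_smono _ (fun e => (x - ub e * (t - e)) * rhob e * ub e)) => //.
  exact: gGi.
move=> e /andP[a b].
have e0 : 0 <= e by apply: le_trans t0 (ltW a).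
have h : 0 < ub e * (e - t) by apply: mulr_gt0; [exact: hubp | lra].
apply: mulr_gt0; last exact: hubp.
apply: mulr_gt0; last exact: hrbp.
have -> : x - ub e * (t - e) = x + ub e * (e - t) by ring.
lra.
Qed.

Lemma G0 t : 0 <= t -> argmin0 (fun y => Gfun ub rhob y 0 t) = [set t].
Proof.
move=> t0.
set g := fun e => (0 - ub e * (t - e)) * rhob e * ub e.
have gg : good g by exact: gGi.
have key : forall z, 0 <= z -> z != t -> P g t < P g z.
  move=> z z0 zt; have [lt|gt] := ltP z t; last first.
    have gt' : t < z by rewrite lt_neqAle eq_sym zt.
    apply: P_smono => // e /andP[a b].
    have e0 : 0 <= e by apply: le_trans t0 (ltW a).
    have h : 0 < ub e * (e - t) by apply: mulr_gt0; [exact: hubp | lra].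
    rewrite /g; apply: mulr_gt0; last exact: hubp.
    apply: mulr_gt0; last exact: hrbp.
    lra.
  set m := (z + t) / 2.
  have m0 : 0 <= m by rewrite /m; lra.
  have gn : good (fun e => - g e) by exact: good_opp.
  have pos : forall e, 0 <= e -> e < t -> 0 < - g e.
    move=> e e0 et; rewrite /g.
    have -> : - ((0 - ub e * (t - e)) * rhob e * ub e) =
      ub e * (t - e) * rhob e * ub e by ring.
    apply: mulr_gt0; last exact: hubp.
    apply: mulr_gt0; last exact: hrbp.
    by apply: mulr_gt0; [exact: hubp | lra].
  have h1 : P (fun e => - g e) z < P (fun e => - g e) m.
    apply: P_smono => //; first by rewrite /m; lra.
    move=> e /andP[a b]; apply: pos; rewrite /m in b; lra.
  have h2 : P (fun e => - g e) m <= P (fun e => - g e) t.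
    apply: P_mono => //; first by rewrite /m; lra.
    move=> e /andP[a b]; have [et|et] := ltP e t.
      by apply/ltW/pos => //; rewrite /m in a; lra.
    have -> : e = t by apply/eqP; rewrite eq_le b et.
    by have -> : - g t = 0 by rewrite /g; ring.
  move: h1 h2; rewrite !P_opp //; lra.
apply/seteqP; split => y.
  case=> y0 hy; apply/eqP; apply/negPn/negP => yt.
  have := hy t t0; apply/negP; rewrite -ltNge.
  exact: key.
move=> -> /=; split => // z z0.
have [->|zt] := eqVneq z t; first exact: lexx.
exact/ltW/key.
Qed.

End Main.

Theorem lemma2p1 (R : realType) (u0 ub rho0 rhob : R -> R)
  (* u0, ub bounded measurable on [0,oo), ub > 0 *)
  (hu0m : measurable_fun (`[0%R, +oo[ : set R) u0)
  (hu0b : exists M : R, forall eta, 0 <= eta -> `|u0 eta| <= M)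
  (hubm : measurable_fun (`[0%R, +oo[ : set R) ub)
  (hubb : exists M : R, forall eta, 0 <= eta -> `|ub eta| <= M)
  (hubp : forall eta, 0 <= eta -> 0 < ub eta)
  (* rho0, rhob positive, locally bounded, measurable on [0,oo) *)
  (hr0m : measurable_fun (`[0%R, +oo[ : set R) rho0)
  (hr0p : forall eta, 0 <= eta -> 0 < rho0 eta)
  (hr0b : forall L, exists C : R, forall eta, 0 <= eta <= L -> rho0 eta <= C)
  (hrbm : measurable_fun (`[0%R, +oo[ : set R) rhob)
  (hrbp : forall eta, 0 <= eta -> 0 < rhob eta)
  (hrbb : forall L, exists C : R, forall eta, 0 <= eta <= L -> rhob eta <= C)
  (* the minima are attained *)
  (hFmin : forall x t, 0 <= x -> 0 <= t ->
     exists y, argmin0 (fun y => Ffun u0 rho0 y x t) y)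
  (hGmin : forall x t, 0 <= x -> 0 <= t ->
     exists tau, argmin0 (fun tau => Gfun ub rhob tau x t) tau) :
  (* (1) *)
  (forall x t1 t2, 0 <= x -> 0 <= t1 -> t1 <= t2 ->
     tau_low ub rhob x t1 <= tau_low ub rhob x t2 /\
     tau_up ub rhob x t1 <= tau_up ub rhob x t2) /\
  (forall t x1 x2, 0 <= t -> 0 <= x1 -> x1 <= x2 ->
     tau_low ub rhob x2 t <= tau_low ub rhob x1 t /\
     tau_up ub rhob x2 t <= tau_up ub rhob x1 t) /\
  (forall x t1 t2, 0 <= x -> 0 <= t1 -> t1 < t2 ->
     tau_up ub rhob x t1 <= tau_low ub rhob x t2) /\
  (forall t x1 x2, 0 <= t -> 0 <= x1 -> x1 < x2 ->
     tau_up ub rhob x2 t <= tau_low ub rhob x1 t) /\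
  (* (2) *)
  (forall t x1 x2, 0 <= t -> 0 <= x1 -> x1 <= x2 ->
     y_low u0 rho0 x1 t <= y_low u0 rho0 x2 t /\
     y_up u0 rho0 x1 t <= y_up u0 rho0 x2 t) /\
  (forall t x1 x2, 0 <= t -> 0 <= x1 -> x1 < x2 ->
     y_up u0 rho0 x1 t <= y_low u0 rho0 x2 t) /\
  (* (3) *)
  (forall t, 0 <= t -> tau_low ub rhob 0 t = t /\ tau_up ub rhob 0 t = t) /\
  (* (4) *)
  lsc_on (@quad R) (fun p => y_low u0 rho0 p.1 p.2) /\
  usc_on (@quad R) (fun p => y_up u0 rho0 p.1 p.2) /\
  (* (5) *)
  lsc_on (@quad R) (fun p => tau_low ub rhob p.1 p.2) /\
  usc_on (@quad R) (fun p => tau_up ub rhob p.1 p.2).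
Proof.
have [Mu hMu] := hu0b; have [Mb hMb] := hubb.
have gu0 : good u0.
  by split => // L; exists Mu => y /andP[y0 _]; exact: hMu.
have gub : good ub.
  by split => // L; exists Mb => y /andP[y0 _]; exact: hMb.
have gr0 : good rho0.
  split => // L; have [C hC] := hr0b L; exists C => y hy.
  rewrite ger0_norm; first exact: hC.
  by apply/ltW/hr0p; case/andP: hy.
have grb : good rhob.
  split => // L; have [C hC] := hrbb L; exists C => y hy.
  rewrite ger0_norm; first exact: hC.
  by apply/ltW/hrbp; case/andP: hy.
have Mu0 := Mu0 _ _ hMu.
have FB' := FB _ _ gu0 gr0 _ hMu hr0p.
have GB' := GB _ _ gub grb hubp hrbp.
have Fd := Fdiff _ _ gu0 gr0; have Gd := Gdiff _ _ gub grb.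
have SG : forall x t B, 0 <= x -> 0 <= t -> t <= B ->
    forall y, argmin0 (fun y => Gfun ub rhob y x t) y -> 0 <= y <= B.
  move=> x t B x0 t0 tB y hy; rewrite (le_trans (GB' _ _ _ x0 t0 hy) tB) andbT.
  by case: hy.
have SF : forall x t B, 0 <= x -> 0 <= t -> x + t * Mu <= B ->
    forall y, argmin0 (fun y => Ffun u0 rho0 y x t) y -> 0 <= y <= B.
  move=> x t B x0 t0 tB y hy; rewrite (le_trans (FB' _ _ _ x0 t0 hy) tB) andbT.
  by case: hy.
have Fmono : forall t x1 x2 a b, x1 < x2 ->
    argmin0 (fun y => Ffun u0 rho0 y x1 t) a ->
    argmin0 (fun y => Ffun u0 rho0 y x2 t) b -> a <= b.
  move=> t x1 x2 a b lt ha hb.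
  apply: (@argmin_compare _ _ _ (P (fun e => - rho0 e)) (x2 - x1) _ _ _ a b ha hb).
  - by rewrite subr_gt0.
  - move=> y y0; have := Fd y x1 t x2 t y0; rewrite subrr mul0r addr0.
    by move=> h; rewrite -h; ring.
  - move=> y z y0 yz; rewrite !P_opp // ltrN2.
    apply: P_smono => // e /andP[e1 _]; apply: hr0p; apply: le_trans y0 (ltW e1).
have Gxmono : forall t x1 x2 a b, x1 < x2 ->
    argmin0 (fun y => Gfun ub rhob y x2 t) a ->
    argmin0 (fun y => Gfun ub rhob y x1 t) b -> a <= b.
  move=> t x1 x2 a b lt ha hb.
  apply: (@argmin_compare _ _ _ (fun y => - P (fun e => rhob e * ub e) y)
    (x2 - x1) _ _ _ a b ha hb).
  - by rewrite subr_gt0.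
  - move=> y y0; have := Gd y x2 t x1 t y0; rewrite subrr mul0r addr0.
    by move=> h; apply/eqP; rewrite -subr_eq0; apply/eqP;
       rewrite (_ : _ - _ = Gfun ub rhob y x1 t - Gfun ub rhob y x2 t
          - (x1 - x2) * P (fun e => rhob e * ub e) y); [rewrite h subrr | ring].
  - move=> y z y0 yz; rewrite ltrN2.
    apply: P_smono => //; first exact: good_mul.
    move=> e /andP[e1 _]; have e0 : 0 <= e by apply: le_trans y0 (ltW e1).
    by apply: mulr_gt0; [exact: hrbp | exact: hubp].
have Gtmono : forall x t1 t2 a b, t1 < t2 ->
    argmin0 (fun y => Gfun ub rhob y x t1) a ->
    argmin0 (fun y => Gfun ub rhob y x t2) b -> a <= b.
  move=> x t1 t2 a b lt ha hb.
  apply: (@argmin_compare _ _ _ (P (fun e => - (ub e * rhob e * ub e)))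
    (t2 - t1) _ _ _ a b ha hb).
  - by rewrite subr_gt0.
  - move=> y y0; have := Gd y x t1 x t2 y0; rewrite subrr mul0r add0r.
    by move=> h; rewrite -h; ring.
  - move=> y z y0 yz.
    have g3 : good (fun e => ub e * rhob e * ub e).
      by apply: good_mul => //; exact: good_mul.
    rewrite !P_opp // ltrN2.
    apply: P_smono => //.
    move=> e /andP[e1 _]; have e0 : 0 <= e by apply: le_trans y0 (ltW e1).
    by apply: mulr_gt0; [apply: mulr_gt0; [exact: hubp | exact: hrbp] | exact: hubp].
split.
  move=> x t1 t2 x0 t10; rewrite le_eqVlt => /predU1P[<-|lt]; first by [].
  have t20 : 0 <= t2 by apply: le_trans t10 (ltW lt).
  have [i s _] := @sets_order _ _ _ t2 (hGmin _ _ x0 t10) (hGmin _ _ x0 t20)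
    (SG _ _ _ x0 t10 (ltW lt)) (SG _ _ _ x0 t20 (lexx _))
    (fun a b ha hb => Gtmono _ _ _ _ _ lt ha hb).
  by split.
split.
  move=> t x1 x2 t0 x10; rewrite le_eqVlt => /predU1P[<-|lt]; first by [].
  have x20 : 0 <= x2 by apply: le_trans x10 (ltW lt).
  have [i s _] := @sets_order _ _ _ t (hGmin _ _ x20 t0) (hGmin _ _ x10 t0)
    (SG _ _ _ x20 t0 (lexx _)) (SG _ _ _ x10 t0 (lexx _))
    (fun a b ha hb => Gxmono _ _ _ _ _ lt ha hb).
  by split.
split.
  move=> x t1 t2 x0 t10 lt.
  have t20 : 0 <= t2 by apply: le_trans t10 (ltW lt).
  have [_ _ k] := @sets_order _ _ _ t2 (hGmin _ _ x0 t10) (hGmin _ _ x0 t20)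
    (SG _ _ _ x0 t10 (ltW lt)) (SG _ _ _ x0 t20 (lexx _))
    (fun a b ha hb => Gtmono _ _ _ _ _ lt ha hb).
  exact: k.
split.
  move=> t x1 x2 t0 x10 lt.
  have x20 : 0 <= x2 by apply: le_trans x10 (ltW lt).
  have [_ _ k] := @sets_order _ _ _ t (hGmin _ _ x20 t0) (hGmin _ _ x10 t0)
    (SG _ _ _ x20 t0 (lexx _)) (SG _ _ _ x10 t0 (lexx _))
    (fun a b ha hb => Gxmono _ _ _ _ _ lt ha hb).
  exact: k.
have Fle : forall t x1 x2, 0 <= t -> x1 <= x2 -> x1 + t * Mu <= x2 + t * Mu.
  by move=> t x1 x2 _ h; rewrite lerD2r.
split.
  move=> t x1 x2 t0 x10; rewrite le_eqVlt => /predU1P[<-|lt]; first by [].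
  have x20 : 0 <= x2 by apply: le_trans x10 (ltW lt).
  have [i s _] := @sets_order _ _ _ (x2 + t * Mu) (hFmin _ _ x10 t0)
    (hFmin _ _ x20 t0)
    (SF _ _ _ x10 t0 (Fle _ _ _ t0 (ltW lt))) (SF _ _ _ x20 t0 (lexx _))
    (fun a b ha hb => Fmono _ _ _ _ _ lt ha hb).
  by split.
split.
  move=> t x1 x2 t0 x10 lt.
  have x20 : 0 <= x2 by apply: le_trans x10 (ltW lt).
  have [_ _ k] := @sets_order _ _ _ (x2 + t * Mu) (hFmin _ _ x10 t0)
    (hFmin _ _ x20 t0)
    (SF _ _ _ x10 t0 (Fle _ _ _ t0 (ltW lt))) (SF _ _ _ x20 t0 (lexx _))
    (fun a b ha hb => Fmono _ _ _ _ _ lt ha hb).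
  exact: k.
split.
  move=> t t0; rewrite /tau_low /tau_up (G0 _ _ gub grb hubp hrbp _ t0).
  by rewrite inf1 sup1.
have Fcont : forall x t a b, 0 <= a ->
    {within `[a, b], continuous (fun y => Ffun u0 rho0 y x t)}.
  move=> x t a b a0; exact: (hcont_of _ (gFi _ _ gu0 gr0 x t) a b a0).
have Gcont : forall x t a b, 0 <= a ->
    {within `[a, b], continuous (fun y => Gfun ub rhob y x t)}.
  move=> x t a b a0; exact: (hcont_of _ (gGi _ _ gub grb x t) a b a0).
have Fclose := close_gen _ _ _ (good_opp _ gr0) (good_mul _ _ gu0 gr0) Fd.
have Gclose := close_gen _ _ _ (good_mul _ _ grb gub)
  (good_opp _ (good_mul _ _ (good_mul _ _ gub grb) gub)) Gd.
split; first exact: (lsc_inf _ hFmin Fcont Fclose).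
split.
  apply: (usc_sup _ hFmin Fcont Fclose).
  move=> x t x0 t0; exists (x + 1 + (t + 1) * Mu).
  move=> x' t' x'0 t'0 dx dt y hy.
  apply: le_trans (FB' _ _ _ x'0 t'0 hy) _.
  move: dx dt; rewrite !ltr_norml => /andP[_ dx] /andP[_ dt].
  apply: lerD; first lra.
  by apply: ler_wpM2r => //; lra.
split; first exact: (lsc_inf _ hGmin Gcont Gclose).
apply: (usc_sup _ hGmin Gcont Gclose).
move=> x t x0 t0; exists (t + 1).
move=> x' t' x'0 t'0 dx dt y hy.
apply: le_trans (GB' _ _ _ x'0 t'0 hy) _.
by move: dt; rewrite ltr_norml => /andP[_ dt]; lra.
Qed.
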